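(* Let $R$ be a $*$-ring, let $a\in R$, and let $n\geq 3$ be an integer. Then $a$ is dual core invertible if and only if there exists $c\in R$ such that $a^{\circ}=cR$ and $v=a^{n}a^{*}+cc^{*}$ is invertible. In this case $$a_{\mathrm{core}}=a^{*}v^{-1}a^{n-1}.$$
   Context: A $*$-ring is an associative ring with identity $1$ and an involution $*$, i.e. $(a^* )^*=a$, $(ab)^*=b^*a^*$ and $(a+b)^*=a^*+b^*$. For $a\in R$: $a^{\circ}=\{x\in R : ax=0\}$ and $cR=\{cx : x\in R\}$. An element $a$ is dual core invertible if there is $x\in R$ with $(xa)^*=xa$, $x^2a=x$ and $a^2x=a$. Such an $x$ is unique and denoted $a_{\mathrm{core}}$. ''Invertible'' means having a two-sided inverse in $R$. *)

(* Defs.v *)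
From HB Require Import structures.
From mathcomp Require Import all_boot all_order all_algebra.
Set Implicit Arguments. Unset Strict Implicit. Unset Printing Implicit Defensive.
Import GRing.Theory.
Local Open Scope ring_scope.

Definition involution (R : nzRingType) (star : R -> R) : Prop :=
  (forall a, star (star a) = a) /\
  (forall a b, star (a * b) = star b * star a) /\
  (forall a b, star (a + b) = star a + star b).

Definition is_dual_core_inverse (R : nzRingType) (star : R -> R) (a x : R) : Prop :=
  star (x * a) = x * a /\ x ^+ 2 * a = x /\ a ^+ 2 * x = a.

Definition dual_core_invertible (R : nzRingType) (star : R -> R) (a : R) : Prop :=
  exists x, is_dual_core_inverse star a x.

Definition rann_eq_principal (R : nzRingType) (a c : R) : Prop :=
  forall y : R, a * y = 0 <-> exists z : R, y = c * z.

(* Main.v *)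
Require Import Defs.
From mathcomp Require Import all_boot all_order all_algebra.
Import GRing.Theory.
Local Open Scope ring_scope.


Lemma star_facts (R : nzRingType) (s : R -> R) (H : involution s) :
  s 1 = 1 /\ s 0 = 0 /\ (forall x, s (- x) = - s x) /\
  (forall x y, s (x - y) = s x - s y) /\ (forall x k, s (x ^+ k) = (s x) ^+ k).
Proof.
case: H => ss [sm sa].
have s1 : s 1 = 1.
  have E := sm (s 1) 1; rewrite mulr1 ss mulr1 in E; exact: esym E.
have s0 : s 0 = 0.
  have := sa 0 0; rewrite addr0 => /(congr1 (fun t => t - s 0)).
  by rewrite subrr addrK => <-.
have sN : forall x, s (- x) = - s x.
  move=> x; apply/eqP; rewrite -subr_eq0 opprK -sa addrC subrr s0 //.
split=> //; split=> //; split=> //; split.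
  by move=> x y; rewrite sa sN.
move=> x; elim=> [|k IH]; first by rewrite !expr0 s1.
by rewrite exprS sm IH exprSr.
Qed.

Lemma back_dci (R : unitRingType) (s : R -> R) (a c : R) (m : nat)
  (H : involution s) (Hac : a * c = 0)
  (Hu : (a ^+ m.+3 * s a + c * s c) \is a GRing.unit) :
  is_dual_core_inverse s a (s a * (a ^+ m.+3 * s a + c * s c)^-1 * a ^+ m.+2).
Proof.
case: (@star_facts _ s H) => s1 [s0 [sN [sB sX]]].
case: H => ss [sm sa].
set v := a ^+ m.+3 * s a + c * s c.
set w := v^-1.
have wv : w * v = 1 by apply: mulVr.
have sv : s v = a * (s a) ^+ m.+3 + c * s c.
  by rewrite /v sa sm sX sm !ss.
have vW : s v * s w = 1 by rewrite -sm wv s1.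
have CA : s c * s a = 0 by rewrite -sm Hac s0.
have akc : forall j, a ^+ j.+1 * c = 0 by move=> j; rewrite exprSr -mulrA Hac mulr0.
have CAk : forall j, s c * (s a) ^+ j.+1 = 0 by move=> j; rewrite exprS mulrA CA mul0r.
have K : w * a ^+ m.+2 = (s a) ^+ m.+2 * s w.
  have e1 : a ^+ m.+2 * s v = a ^+ m.+3 * (s a) ^+ m.+3.
    by rewrite sv mulrDr mulrA -exprSr mulrA akc mul0r addr0.
  have e2 : v * (s a) ^+ m.+2 = a ^+ m.+3 * (s a) ^+ m.+3.
    by rewrite /v mulrDl -mulrA -exprS -mulrA CAk mulr0 addr0.
  by rewrite -[LHS]mulr1 -vW mulrA -(mulrA w) e1 -e2 mulrA wv mul1r.
have eA : a * ((s a) ^+ m.+3 * s w) = 1 - c * (s c * s w).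
  by rewrite -vW sv mulrDl !mulrA addrK.
have xE : s a * w * a ^+ m.+2 = (s a) ^+ m.+3 * s w by rewrite -mulrA K mulrA -exprS.
split; last split.
- rewrite xE sm sm sX !ss -xE (exprSr a m.+2).
  by rewrite !mulrA.
- have st : a ^+ m.+2 * ((s a) ^+ m.+3 * (s w * a)) = a ^+ m.+2.
    rewrite (exprSr a m.+1) -mulrA (mulrA ((s a) ^+ m.+3)) (mulrA a) eA.
    by rewrite mulrBl mul1r mulrBr -!mulrA (mulrA (a ^+ m.+1)) akc mul0r subr0.
  have xa : s a * w * a ^+ m.+2 * a = (s a) ^+ m.+3 * (s w * a) by rewrite xE mulrA.
  rewrite expr2 -(mulrA _ _ a) xa.
  have st' : forall y, y * a ^+ m.+2 * ((s a) ^+ m.+3 * (s w * a)) = y * a ^+ m.+2.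
    by move=> y; rewrite -mulrA st.
  exact: st'.
- by rewrite xE expr2 -mulrA eA mulrBr mulr1 (mulrA a c) Hac mul0r subr0.
Qed.

Lemma lgen (R : nzRingType) (u v : R) : u = v -> forall y, y * u = y * v.
Proof. by move=> ->. Qed.

Lemma dci_basic (R : nzRingType) (s : R -> R) (a x : R) :
  is_dual_core_inverse s a x ->
  a * x * a = a /\ x * a * x = x /\ x * x * a = x /\ a * a * x = a.
Proof.
case=> H1 [H2 H3]; rewrite expr2 in H2 H3.
split; [|split; [|by split]].
  transitivity (a * a * (x * x * a)); last by rewrite H2 H3.
  by rewrite !mulrA H3.
transitivity (x * x * (a * a * x)); last by rewrite H3 H2.
by rewrite !mulrA H2.
Qed.

Lemma uniq_form (R : unitRingType) (s : R -> R) (a c x : R) (m : nat)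
  (H : involution s) (Hac : a * c = 0)
  (Hu : (a ^+ m.+2 * s a + c * s c) \is a GRing.unit)
  (Hx : is_dual_core_inverse s a x) :
  x = s a * (a ^+ m.+2 * s a + c * s c)^-1 * a ^+ m.+1.
Proof.
case: (@star_facts _ s H) => s1 [s0 [sN [sB sX]]].
case: H => ss [sm sa].
have [axa [xax [xxa aax]]] := @dci_basic _ s a x Hx.
case: Hx => H1 _.
set v := a ^+ m.+2 * s a + c * s c.
have wv : v^-1 * v = 1 by apply: mulVr.
have xc : x * c = 0 by rewrite -{1}xxa -(mulrA (x * x) a c) Hac mulr0.
have vx : v * s x = a ^+ m.+2.
  rewrite /v mulrDl -(mulrA (a ^+ m.+2)) -(mulrA c) -sm H1 -sm xc s0 mulr0 addr0.
  by rewrite (exprSr a m.+1) -(mulrA (a ^+ m.+1)) (mulrA a x a) axa.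
have vxx : v * (s x * x) = a ^+ m.+1.
  by rewrite mulrA vx -(addn2 m) exprD expr2 -mulrA aax -exprSr.
have : s x * x = v^-1 * a ^+ m.+1 by rewrite -vxx mulrA wv mul1r.
move=> E.
by rewrite -{1}xax -H1 sm -mulrA E mulrA.
Qed.

Lemma fwd (R : unitRingType) (s : R -> R) (a x : R) (m : nat)
  (H : involution s) (Hx : is_dual_core_inverse s a x) :
  rann_eq_principal a (1 - x * a) /\
  (a ^+ m.+1 * s a + (1 - x * a) * s (1 - x * a)) \is a GRing.unit.
Proof.
case: (@star_facts _ s H) => s1 [s0 [sN [sB sX]]].
case: H => ss [sm sa].
have [axa [xax [xxa aax]]] := @dci_basic _ s a x Hx.
case: Hx => H1 _.
split.
  move=> y; split.
    by move=> Hy; exists y; rewrite mulrBl mul1r -mulrA Hy mulr0 subr0.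
  by case=> z ->; rewrite mulrA mulrBr mulr1 mulrA axa subrr mul0r.
have sc : s (1 - x * a) = 1 - x * a by rewrite sB s1 H1.
rewrite sc.
have pp : x * a * (x * a) = x * a by rewrite mulrA xax.
have cc : (1 - x * a) * (1 - x * a) = 1 - x * a.
  by rewrite mulrBr mulr1 mulrBl mul1r pp subrr subr0.
rewrite cc.
have AnP : a ^+ m.+1 * (x * a) = a ^+ m.+1.
  by rewrite exprSr -mulrA (mulrA a x a) axa.
have axAn : a * x * a ^+ m.+1 = a ^+ m.+1.
  by rewrite exprS mulrA axa.
have XPk : forall k, x ^+ k.+1 * (x * a) = x ^+ k.+1.
  by move=> k; rewrite exprSr -mulrA (mulrA x x a) xxa.
have AXk : forall k, a ^+ k.+1 * (a * x) = a ^+ k.+1.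
  by move=> k; rewrite exprSr -mulrA (mulrA a a x) aax.
have XAn : forall k, x ^+ k.+1 * a ^+ k.+1 = x * a.
  elim=> [|k IH]; first by rewrite !expr1.
  by rewrite (exprSr x k.+1) (exprS a k.+1) mulrA -(mulrA _ x a) XPk IH.
have AnX : forall k, a ^+ k.+1 * x ^+ k.+1 = a * x.
  elim=> [|k IH]; first by rewrite !expr1.
  by rewrite (exprSr a k.+1) (exprS x k.+1) mulrA -(mulrA _ a x) AXk IH.
have pSa : x * a * s a = s a by rewrite -H1 -sm (mulrA a x a) axa.
have psx : x * a * s x = s x by rewrite -H1 -sm (mulrA x x a) xxa.
have sasx : s a * s x = x * a by rewrite -sm H1.
have paxx : x * a * (a * x) = x * a.
  by rewrite mulrA -(mulrA x a a) -mulrA aax.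
have axxa : a * x * (x * a) = a * x.
  by rewrite mulrA -(mulrA a x x) -mulrA xxa.
have qp : s x * s a * (x * a) = x * a.
  by rewrite -sm -{1}H1 -sm paxx H1.
have XP := XPk m. have XA := XAn m. have AX := AnX m.
move: AnP axAn XP XA AX.
move: (a ^+ m.+1) (x ^+ m.+1) => An X AnP axAn XP XA AX.
set v := An * s a + (1 - x * a).
apply/unitrP; exists (s x * (X - s a * (1 - a * x)) + (1 - a * x)); split.
  have xnv : X * v = s a.
    by rewrite /v mulrDr mulrA XA pSa mulrBr mulr1 XP subrr addr0.
  have axv : (1 - a * x) * v = 1 - x * a.
    rewrite /v mulrDr mulrA mulrBl mul1r axAn subrr mul0r add0r.
    by rewrite mulrBl mul1r mulrBr mulr1 axxa subrr subr0.
  rewrite mulrDl axv -mulrA mulrBl xnv -mulrA axv.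
  have e : s a - s a * (1 - x * a) = s a * (x * a).
    by rewrite mulrBr mulr1 opprB addrC subrK.
  by rewrite e mulrA qp addrC subrK.
have vsx : v * s x = An.
  by rewrite /v mulrDl -mulrA sasx AnP mulrBl mul1r psx subrr addr0.
have v1 : v * (1 - a * x) = An * s a * (1 - a * x) + (1 - a * x).
  rewrite /v mulrDl; congr (_ + _).
  by rewrite mulrBl mul1r mulrBr mulr1 paxx subrr subr0.
rewrite mulrDr mulrA vsx v1 mulrBr AX mulrA.
by rewrite addrA subrK addrC subrK.
Qed.

Theorem theorem2p7 (R : unitRingType) (star : R -> R) (a : R) (n : nat)
  (Hstar : involution star) (Hn : (3 <= n)%N) :
  (dual_core_invertible star a <->
     exists c : R, rann_eq_principal a c /\
       (a ^+ n * star a + c * star c) \is a GRing.unit)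
  /\
  (forall c x : R, rann_eq_principal a c ->
     (a ^+ n * star a + c * star c) \is a GRing.unit ->
     is_dual_core_inverse star a x ->
     x = star a * (a ^+ n * star a + c * star c)^-1 * a ^+ n.-1).
Proof.
case: n Hn => [|[|[|m]]] // _.
have Hac : forall c, rann_eq_principal a c -> a * c = 0.
  by move=> c Hr; apply/(Hr c); exists 1; rewrite mulr1.
split.
  split.
    case=> x Hx; exists (1 - x * a).
    exact: (@fwd _ star a x m.+2 Hstar Hx).
  case=> c [Hr Hu].
  exists (star a * (a ^+ m.+3 * star a + c * star c)^-1 * a ^+ m.+2).
  exact: (@back_dci _ star a c m Hstar (Hac c Hr) Hu).
move=> c x Hr Hu Hx.
exact: (@uniq_form _ star a c x m.+1 Hstar (Hac c Hr) Hu Hx).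
Qed.
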